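(* Let $\Gamma$ act by automorphisms on a finite dimensional CAT(0) cube complex $X$. If the action is Roller elementary (some $\Gamma$-orbit in $\overline X$ is finite), then there are $v,w\in\overline X$ with $\Gamma\cdot\mathcal I(v,w)=\mathcal I(v,w)$. If moreover some $\Gamma$-orbit in $\overline X$ has odd cardinality, then $\Gamma$ has a fixed point in $\overline X$.
   Context: $X$ is a finite-dimensional, second countable CAT(0) cube complex identified with its vertex set; $\mathfrak H$ its half-spaces; $U_v=\{h:v\in h\}$; the Roller compactification $\overline X$ is the closure of $\{U_v\}$ in $2^{\mathfrak H}$, each $\xi\in\overline X$ being a subset $U_\xi\subset\mathfrak H$. For $v,w\in\overline X$, $\mathcal I(v,w)=\{m\in\overline X:U_v\cap U_w\subset U_m\}$. *)

(* Defs.v *)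
(* A finite-dimensional, second countable CAT(0) cube complex is
   encoded through its vertex set and its half-spaces (Sageev/Roller duality):
   the vertex set is exactly the set of consistent orientations of the half-space
   pocset that differ finitely from a given vertex. *)
From Stdlib Require Import List Arith.
Import ListNotations.

Record CubeComplex := {
  vert : Type;
  hs : Type;
  hstar : hs -> hs;
  inU : vert -> hs -> Prop;        (* inU v h  <->  h ∈ U_v  <->  v ∈ h *)
  hstar_invol : forall h, hstar (hstar h) = h;
  inU_star : forall v h, inU v (hstar h) <-> ~ inU v h;
  hs_nonempty : forall h, exists v, inU v h;
  hs_ext : forall h k, (forall v, inU v h <-> inU v k) -> h = k;
  vert_ext : forall v w, (forall h, inU v h <-> inU w h) -> v = w;
  sep_finite : forall v w, exists l : list hs,
      forall h, inU v h -> ~ inU w h -> In h l;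
  vert_complete : forall (S : hs -> Prop) (v : vert),
      (forall h, S (hstar h) <-> ~ S h) ->
      (forall h k, (forall u, inU u h -> inU u k) -> S h -> S k) ->
      (exists l : list hs, forall h, S h -> ~ inU v h -> In h l) ->
      exists w, forall h, inU w h <-> S h;
  vert_inhabited : inhabited vert;
  (* second countable: countably many half-spaces (equivalently, cubes) *)
  hs_countable : exists e : nat -> option hs, forall h, exists n, e n = Some h;
  (* finite dimensional: pairwise transverse families of half-spaces are bounded *)
  fin_dim : exists d : nat, forall l : list hs, NoDup l ->
      (forall h k, In h l -> In k l -> h <> k ->
         (exists v, inU v h /\ inU v k) /\
         (exists v, inU v h /\ inU v (hstar k)) /\
         (exists v, inU v (hstar h) /\ inU v k) /\
         (exists v, inU v (hstar h) /\ inU v (hstar k))) ->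
      length l <= d
}.

Record GroupAction (X : CubeComplex) := {
  grp : Type;
  gmul : grp -> grp -> grp;
  gone : grp;
  ginv : grp -> grp;
  gmul_assoc : forall a b c, gmul a (gmul b c) = gmul (gmul a b) c;
  gmul_one_l : forall a, gmul gone a = a;
  gmul_inv_l : forall a, gmul (ginv a) a = gone;
  actV : grp -> vert X -> vert X;
  actH : grp -> hs X -> hs X;
  act_star : forall g h, actH g (hstar X h) = hstar X (actH g h);
  act_inU : forall g v h, inU X (actV g v) (actH g h) <-> inU X v h;
  actV_one : forall v, actV gone v = v;
  actV_mul : forall a b v, actV (gmul a b) v = actV a (actV b v);
  actH_one : forall h, actH gone h = h;
  actH_mul : forall a b h, actH (gmul a b) h = actH a (actH b h)
}.
Arguments grp {X}.
Arguments ginv {X}.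
Arguments actH {X}.

(* Points of 2^𝔥 are subsets U ⊂ 𝔥, i.e. predicates on half-spaces. *)
Definition hsset (X : CubeComplex) := hs X -> Prop.

(* Roller compactification: closure of {U_v} in the product topology on 2^𝔥. *)
Definition roller (X : CubeComplex) (xi : hsset X) : Prop :=
  forall F : list (hs X), exists v : vert X,
    forall h, In h F -> (xi h <-> inU X v h).

(* induced action on 2^𝔥:  U_{g ξ} = g U_ξ = { g h : h ∈ U_ξ } *)
Definition gact {X : CubeComplex} (A : GroupAction X) (g : grp A)
  (xi : hsset X) : hsset X :=
  fun h => xi (actH A (ginv A g) h).

Definition interval (X : CubeComplex) (v w m : hsset X) : Prop :=
  roller X m /\ forall h, v h -> w h -> m h.

(* Main.v *)
Require Import Defs.
From Stdlib Require Import List Arith.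
From Stdlib Require Import Lia Permutation FinFun Classical ClassicalEpsilon FunctionalExtensionality PropExtensionality.
Import ListNotations.

Definition ind (P : Prop) : nat := if excluded_middle_informative P then 1 else 0.

Lemma ind_true (P : Prop) : P -> ind P = 1.
Proof. unfold ind; destruct (excluded_middle_informative P); tauto. Qed.
Lemma ind_false (P : Prop) : ~ P -> ind P = 0.
Proof. unfold ind; destruct (excluded_middle_informative P); tauto. Qed.
Lemma ind_iff P Q : (P <-> Q) -> ind P = ind Q.
Proof.
  intros H; destruct (classic P).
  - rewrite !ind_true; tauto.
  - rewrite !ind_false; tauto.
Qed.

Fixpoint cnt {X : CubeComplex} (L : list (hsset X)) (h : hs X) : nat :=
  match L with nil => 0 | p :: L' => ind (p h) + cnt L' h end.

Definition incl_hs (X : CubeComplex) (h k : hs X) := forall u, inU X u h -> inU X u k.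
Definition good {X : CubeComplex} (p : hsset X) :=
  (forall h, p (hstar X h) <-> ~ p h) /\ (forall h k, incl_hs X h k -> p h -> p k).

Lemma roller_good X p : roller X p -> good p.
Proof.
  intros R; split.
  - intros h. destruct (R [h; hstar X h]) as [v Hv].
    rewrite (Hv (hstar X h)) by (simpl; auto). rewrite (Hv h) by (simpl; auto).
    apply inU_star.
  - intros h k Hi Ph. destruct (R [h; k]) as [v Hv].
    apply (Hv k); [simpl; auto|]. apply Hi. apply (Hv h); simpl; auto.
Qed.

Lemma vert_good X u : good (inU X u).
Proof. split; [intros; apply inU_star | intros h k Hi; apply Hi]. Qed.

Lemma cnt_star X (L : list (hsset X)) h : (forall p, In p L -> good p) ->
  cnt L (hstar X h) + cnt L h = length L.
Proof.
  induction L as [|a L IH]; intros G; simpl; auto.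
  assert (Ga : good a) by (apply G; simpl; auto). destruct Ga as [S _].
  assert (IH' := IH (fun p Hp => G p (or_intror Hp))).
  destruct (classic (a h)) as [Ha|Ha].
  - rewrite (ind_true _ Ha), ind_false by (rewrite S; tauto). lia.
  - rewrite (ind_false _ Ha), ind_true by (apply S; auto). lia.
Qed.

Lemma cnt_mono X (L : list (hsset X)) h k : (forall p, In p L -> p h -> p k) ->
  cnt L h <= cnt L k.
Proof.
  induction L as [|a L IH]; intros G; simpl; auto.
  assert (IH' := IH (fun p Hp => G p (or_intror Hp))).
  destruct (classic (a h)) as [Ha|Ha].
  - rewrite (ind_true _ Ha), (ind_true (a k)) by (apply G; simpl; auto). lia.
  - rewrite (ind_false _ Ha). lia.
Qed.

Lemma cnt_eq X (L : list (hsset X)) h k : (forall p, In p L -> p h -> p k) ->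
  cnt L h = cnt L k -> forall p, In p L -> p k -> p h.
Proof.
  induction L as [|a L IH]; intros G E p Hp Hk; simpl in *; [contradiction|].
  assert (M := cnt_mono X L h k (fun p Hp => G p (or_intror Hp))).
  destruct (classic (a h)) as [Ha|Ha]; destruct (classic (a k)) as [Hak|Hak].
  - rewrite (ind_true _ Ha), (ind_true _ Hak) in E.
    destruct Hp as [<-|Hp]; auto. apply (IH (fun p Hp => G p (or_intror Hp))); auto; lia.
  - exfalso; apply Hak, G; auto.
  - rewrite (ind_false _ Ha), (ind_true _ Hak) in E. lia.
  - rewrite (ind_false _ Ha), (ind_false _ Hak) in E.
    destruct Hp as [<-|Hp]; [contradiction|].
    apply (IH (fun p Hp => G p (or_intror Hp))); auto.
Qed.

Lemma cnt_pos X (L : list (hsset X)) h : 0 < cnt L h -> exists p, In p L /\ p h.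
Proof.
  induction L as [|a L IH]; simpl; intros H; [lia|].
  destruct (classic (a h)) as [Ha|Ha]; [exists a; auto|].
  rewrite (ind_false _ Ha) in H. destruct (IH H) as [p [? ?]]; eauto.
Qed.

Definition tb {X : CubeComplex} (b : bool) (p : hsset X) (h : hs X) : Prop :=
  if b then p (hstar X h) else p h.
Definition maj {X : CubeComplex} (L : list (hsset X)) (p0 : hsset X) (b : bool) (h : hs X) : Prop :=
  length L < 2 * cnt L h \/ (2 * cnt L h = length L /\ tb b p0 h).

Lemma tb_star X b (p0 : hsset X) h : good p0 -> (tb b p0 (hstar X h) <-> ~ tb b p0 h).
Proof.
  intros [S _]; destruct b; simpl.
  - rewrite hstar_invol. rewrite (S h). split; [tauto| apply NNPP].
  - apply S.
Qed.

Lemma tb_mono X (L : list (hsset X)) b p0 h k : good p0 -> In p0 L -> incl_hs X h k ->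
  (forall p, In p L -> p k -> p h) -> tb b p0 h -> tb b p0 k.
Proof.
  intros [S M] H0 Hi Hr; destruct b; simpl.
  - rewrite !S. intros N Pk; apply N, Hr; auto.
  - apply M; auto.
Qed.

Lemma maj_star X (L : list (hsset X)) p0 b h : (forall p, In p L -> good p) -> good p0 ->
  (maj L p0 b (hstar X h) <-> ~ maj L p0 b h).
Proof.
  intros G G0. unfold maj. rewrite tb_star by auto.
  assert (Hc := cnt_star X L h G).
  destruct (lt_eq_lt_dec (2 * cnt L h) (length L)) as [[H|H]|H].
  - split; [intros _ [?|[? _]]; lia | intros _; left; lia].
  - split.
    + intros [?|[? nT]] [?|[? T]]; try lia; auto.
    + intros N; right; split; [lia| intro T; apply N; right; auto].
  - split; [intros [?|[? ?]]; lia | intros N; exfalso; apply N; left; lia].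
Qed.

Lemma maj_mono X (L : list (hsset X)) p0 b h k : (forall p, In p L -> good p) -> good p0 ->
  In p0 L -> incl_hs X h k -> maj L p0 b h -> maj L p0 b k.
Proof.
  intros G G0 H0 Hi. unfold maj.
  assert (Hm : forall p, In p L -> p h -> p k) by (intros p Hp; apply (proj2 (G p Hp)); auto).
  assert (M := cnt_mono X L h k Hm).
  intros [H|[H T]]; [left; lia|].
  destruct (lt_eq_lt_dec (2 * cnt L k) (length L)) as [[H'|H']|H']; [lia| |left; lia].
  right; split; auto.
  apply (tb_mono X L b p0 h k); auto.
  apply cnt_eq; auto. lia.
Qed.

Lemma maj_vertex X (us : list (vert X)) u0 b : In u0 us ->
  exists w, forall h, inU X w h <-> maj (map (inU X) us) (inU X u0) b h.
Proof.
  intros Hu0.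
  assert (Hsep: exists l, forall u, In u us -> forall h, inU X u h -> ~ inU X u0 h -> In h l).
  { clear Hu0. induction us as [|a us IH].
    - exists []; intros u [].
    - destruct IH as [l Hl]. destruct (sep_finite X a u0) as [la Hla].
      exists (la ++ l). intros u [<-|Hu] h H1 H2; apply in_or_app; [left; apply Hla; auto | right; apply (Hl u Hu); auto]. }
  destruct Hsep as [l Hl].
  assert (G : forall p, In p (map (inU X) us) -> good p).
  { intros p Hp; apply in_map_iff in Hp as [u [<- _]]; apply vert_good. }
  assert (Hp0: In (inU X u0) (map (inU X) us)) by (apply in_map; auto).
  assert (Hlen: 0 < @length (hsset X) (map (inU X) us))
    by (destruct (map (inU X) us); [contradiction|simpl; lia]).
  destruct (vert_complete X (maj (map (inU X) us) (inU X u0) b) u0) as [w Hw].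
  - intros h; apply maj_star; auto; apply vert_good.
  - intros h k Hi; apply maj_mono; auto; apply vert_good.
  - exists l. intros h Hm Hn.
    assert (Hpos: 0 < cnt (map (inU X) us) h) by (unfold maj in Hm; destruct Hm as [H|[H _]]; lia).
    apply cnt_pos in Hpos as [p [Hp Hph]]. apply in_map_iff in Hp as [u [<- Hu]].
    eapply Hl; eauto.
  - exists w; exact Hw.
Qed.

Lemma approx X (F : list (hs X)) (L : list (hsset X)) : (forall p, In p L -> roller X p) ->
  exists us : list (vert X), length us = length L /\
    (forall h, In h F -> cnt L h = cnt (map (inU X) us) h) /\
    (forall p, In p L -> exists u, In u us /\ forall h, In h F -> (p h <-> inU X u h)).
Proof.
  induction L as [|a L IH]; intros R.
  - exists []; simpl; repeat split; auto. intros p [].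
  - destruct (R a (or_introl eq_refl) F) as [v Hv].
    destruct (IH (fun p Hp => R p (or_intror Hp))) as [us [H1 [H2 H3]]].
    exists (v :: us). split; [simpl; auto|]. split.
    + intros h Hh; simpl. rewrite (ind_iff _ _ (Hv h Hh)), H2; auto.
    + intros p [<-|Hp]; [exists v; simpl; auto|].
      destruct (H3 p Hp) as [u [? ?]]; exists u; simpl; auto.
Qed.

Lemma maj_roller X (L : list (hsset X)) p0 b : (forall p, In p L -> roller X p) -> In p0 L ->
  roller X (maj L p0 b).
Proof.
  intros R H0 F.
  destruct (approx X (F ++ map (hstar X) F) L R) as [us [Hlen [Hc Hp]]].
  destruct (Hp p0 H0) as [u0 [Hu0 Hu0']].
  destruct (maj_vertex X us u0 b Hu0) as [w Hw].
  exists w. intros h Hh. rewrite Hw. unfold maj. rewrite length_map, Hlen.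
  assert (hF : In h (F ++ map (hstar X) F)) by (apply in_or_app; left; auto).
  rewrite <- (Hc h hF).
  assert (tb b p0 h <-> tb b (inU X u0) h).
  { destruct b; simpl; apply Hu0'; auto. apply in_or_app; right; apply in_map; auto. }
  tauto.
Qed.

Section G.
Lemma mul_inv_r X (A : GroupAction X) a : gmul X A a (ginv A a) = gone X A.
Proof.
  rewrite <- (gmul_one_l X A (gmul X A a (ginv A a))).
  rewrite <- (gmul_inv_l X A (ginv A a)) at 1.
  rewrite <- gmul_assoc. rewrite (gmul_assoc X A (ginv A a) a (ginv A a)).
  rewrite (gmul_inv_l X A a), gmul_one_l. apply gmul_inv_l.
Qed.
End G.

Lemma mul_one_r X (A : GroupAction X) a : gmul X A a (gone X A) = a.
Proof. rewrite <- (gmul_inv_l X A a), gmul_assoc, mul_inv_r, gmul_one_l. reflexivity. Qed.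

Lemma inv_one X (A : GroupAction X) : ginv A (gone X A) = gone X A.
Proof. rewrite <- (mul_one_r X A (ginv A (gone X A))). apply gmul_inv_l. Qed.

Lemma inv_mul X (A : GroupAction X) a b :
  ginv A (gmul X A a b) = gmul X A (ginv A b) (ginv A a).
Proof.
  assert (E: gmul X A (gmul X A a b) (gmul X A (ginv A b) (ginv A a)) = gone X A).
  { rewrite <- gmul_assoc, (gmul_assoc X A b), mul_inv_r, gmul_one_l, mul_inv_r. reflexivity. }
  rewrite <- (gmul_one_l X A (gmul X A (ginv A b) (ginv A a))).
  rewrite <- (gmul_inv_l X A (gmul X A a b)), <- gmul_assoc, E, mul_one_r. reflexivity.
Qed.

Lemma gact_mul X (A : GroupAction X) g g' xi :
  gact A g (gact A g' xi) = gact A (gmul X A g g') xi.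
Proof.
  unfold gact. apply functional_extensionality; intro h. rewrite inv_mul, actH_mul. reflexivity.
Qed.

Lemma gact_one X (A : GroupAction X) xi : gact A (gone X A) xi = xi.
Proof.
  unfold gact. apply functional_extensionality; intro h. rewrite inv_one, actH_one. reflexivity.
Qed.

Lemma gact_inj X (A : GroupAction X) g : Injective (gact A g).
Proof.
  intros x y E. apply functional_extensionality; intro h.
  pose proof (f_equal (fun f => f (actH A g h)) E) as E'. unfold gact in E'. simpl in E'.
  rewrite <- actH_mul, gmul_inv_l, actH_one in E'. exact E'.
Qed.

Lemma gact_roller X (A : GroupAction X) g xi : roller X xi -> roller X (gact A g xi).
Proof.
  intros R F. destruct (R (map (actH A (ginv A g)) F)) as [v Hv].
  exists (actV X A g v). intros h Hh. unfold gact.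
  rewrite (Hv _ (in_map _ _ _ Hh)). rewrite <- (act_inU X A g v).
  rewrite <- actH_mul, mul_inv_r, actH_one. reflexivity.
Qed.

Lemma cnt_map_gact X (A : GroupAction X) g L h :
  cnt (map (gact A g) L) h = cnt L (actH A (ginv A g) h).
Proof. induction L; simpl; auto. Qed.

Lemma cnt_perm X (L L' : list (hsset X)) h : Permutation L L' -> cnt L h = cnt L' h.
Proof. induction 1; simpl; lia. Qed.

Lemma orbit_inv X (A : GroupAction X) xi O g h : NoDup O ->
  (forall x, In x O <-> exists g, x = gact A g xi) ->
  cnt O (actH A (ginv A g) h) = cnt O h.
Proof.
  intros N HO. rewrite <- cnt_map_gact. apply cnt_perm.
  apply Permutation_map_same_l.
  - apply Injective_map_NoDup; auto. apply gact_inj.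
  - intros y Hy. apply in_map_iff in Hy as [x [<- Hx]].
    apply HO in Hx as [g' ->]. apply HO. exists (gmul X A g g'). apply gact_mul.
Qed.

Lemma nodup_filter_ex {T} (l : list T) (P : T -> Prop) :
  exists O, NoDup O /\ forall x, In x O <-> In x l /\ P x.
Proof.
  induction l as [|a l [O [N H]]].
  - exists []; split; [constructor| simpl; tauto].
  - destruct (classic (P a /\ ~ In a O)) as [[Pa nI]|C].
    + exists (a::O). split; [constructor; auto|]. intros x; simpl; rewrite H. split.
      * intros [<-|[? ?]]; [split; auto | split; auto].
      * intros [[<-|?] ?]; [left; reflexivity | right; split; auto].
    + exists O. split; auto. intros x; simpl; rewrite H. split.
      * intros [? ?]; split; auto.
      * intros [[<-|?] ?]; split; auto.
        destruct (classic (In a O)) as [I|I]; [apply H in I; tauto | exfalso; apply C; auto].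
Qed.

Theorem proposition9p1 (X : CubeComplex) (A : GroupAction X) :
  (* Roller elementary: some Γ-orbit in X̄ is finite *)
  (exists xi : hsset X, roller X xi /\
     exists l : list (hsset X), forall g : grp A, In (gact A g xi) l) ->
  (* there are v, w ∈ X̄ with Γ · I(v,w) = I(v,w) *)
  (exists v w : hsset X, roller X v /\ roller X w /\
     forall m : hsset X,
       interval X v w m <->
       exists (g : grp A) (m' : hsset X), interval X v w m' /\ m = gact A g m')
  /\
  (* if moreover some Γ-orbit in X̄ has odd cardinality, Γ fixes a point of X̄ *)
  ((exists (xi : hsset X) (l : list (hsset X)), roller X xi /\ NoDup l /\
      (forall eta, In eta l <-> exists g : grp A, eta = gact A g xi) /\
      Nat.odd (length l) = true) ->
   exists xi : hsset X, roller X xi /\ forall g : grp A, gact A g xi = xi).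
Proof.
  intros [xi [Rxi [l Hl]]].
  split.
  - destruct (nodup_filter_ex l (fun x => exists g, x = gact A g xi)) as [O [NO HO]].
    assert (HO' : forall x, In x O <-> exists g, x = gact A g xi).
    { intros x; rewrite HO; split; [tauto| intros [g ->]; split; [apply Hl| exists g; auto]]. }
    assert (RO : forall p, In p O -> roller X p).
    { intros p Hp; apply HO' in Hp as [g ->]; apply gact_roller; auto. }
    assert (xiO : In xi O). { apply HO'. exists (gone X A). rewrite gact_one; auto. }
    exists (maj O xi false), (maj O xi true).
    split; [apply maj_roller; auto|]. split; [apply maj_roller; auto|].
    assert (KEY: forall m, interval X (maj O xi false) (maj O xi true) m <->
                 roller X m /\ forall h, length O < 2 * cnt O h -> m h).
    { intros m; unfold interval, maj, tb. destruct (roller_good _ _ Rxi) as [Sx _]. split.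
      - intros [Rm Hm]; split; [exact Rm|]. intros h Hh. apply Hm; left; auto.
      - intros [Rm Hm]; split; [exact Rm|]. intros h [H1|[_ H1]] [H2|[_ H2]]; auto.
        exfalso; apply Sx in H2; auto. }
    intros m. rewrite KEY. split.
    + intros Hm. exists (gone X A), m. rewrite KEY, gact_one. auto.
    + intros [g [m' [Hm' ->]]]. rewrite KEY in Hm'. destruct Hm' as [Rm' Hm'].
      split; [apply gact_roller; auto|]. intros h Hh. unfold gact. apply Hm'.
      rewrite (orbit_inv X A xi O g h NO HO'). exact Hh.
  - intros [xi' [l' [Rxi' [N [Hl' Hodd]]]]].
    assert (RO : forall p, In p l' -> roller X p).
    { intros p Hp; apply Hl' in Hp as [g ->]; apply gact_roller; auto. }
    assert (xiO : In xi' l'). { apply Hl'. exists (gone X A). rewrite gact_one; auto. }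
    assert (notie : forall c, 2 * c <> length l').
    { intros c E; rewrite <- E, Nat.odd_mul in Hodd; simpl in Hodd; discriminate. }
    exists (maj l' xi' false). split; [apply maj_roller; auto|].
    intros g. apply functional_extensionality; intro h. apply propositional_extensionality.
    unfold gact, maj. rewrite (orbit_inv X A xi' l' g h N Hl').
    split; intros [H|[H _]]; try (left; exact H); exfalso; eapply notie; eauto.
Qed.
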